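(* Let $\mathbf A$ be a residuated semigroup and $p$ a positive idempotent of $\mathbf A$. The following are equivalent: (1) $pa=ap$ for every $a\in A$; (2) for every $a\in A$, $pa=a$ if and only if $ap=a$; (3) for every $a\in A$, $p\backslash a=a$ if and only if $a/p=a$; (4) for every $a\in A$, $p\backslash a=a/p$; (5) $\{p\backslash a: a\in A\}=\{a/p: a\in A\}$.
   Context: A residuated semigroup is a structure $\langle A,\le,\cdot,\backslash,/\rangle$ where $\langle A,\le\rangle$ is a poset, $\langle A,\cdot\rangle$ is a semigroup (we write $xy$ for $x\cdot y$), and for all $x,y,z$: $xy\le z\iff x\le z/y\iff y\le x\backslash z$. An element $p$ is positive if $a\le pa$ and $a\le ap$ for all $a\in A$; it is idempotent if $pp=p$. *)

(* Defs.v *)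
(* A residuated semigroup <A, <=, ., \, />, given by its carrier and
   operations: [le] a partial order, [mul] associative, and
   mul x y <= z  <->  le x (rdiv z y)  <->  le y (ldiv x z),
   where [ldiv x z] is x\z and [rdiv z y] is z/y. *)
Definition is_residuated_semigroup (A : Type) (le : A -> A -> Prop)
    (mul ldiv rdiv : A -> A -> A) : Prop :=
  (forall x, le x x) /\
  (forall x y, le x y -> le y x -> x = y) /\
  (forall x y z, le x y -> le y z -> le x z) /\
  (forall x y z, mul (mul x y) z = mul x (mul y z)) /\
  (forall x y z, (le (mul x y) z <-> le x (rdiv z y)) /\
                 (le x (rdiv z y) <-> le y (ldiv x z))).

Definition is_positive (A : Type) (le : A -> A -> Prop) (mul : A -> A -> A) (p : A) : Prop :=
  forall a, le a (mul p a) /\ le a (mul a p).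

Definition is_idempotent (A : Type) (mul : A -> A -> A) (p : A) : Prop :=
  mul p p = p.

(* Main.v *)
Require Import Defs.

Theorem proposition2p5 (A : Type) (le : A -> A -> Prop) (mul ldiv rdiv : A -> A -> A)
  (p : A)
  (HA : is_residuated_semigroup A le mul ldiv rdiv)
  (Hpos : is_positive A le mul p) (Hidem : is_idempotent A mul p) :
  let c1 := forall a, mul p a = mul a p in
  let c2 := forall a, mul p a = a <-> mul a p = a in
  let c3 := forall a, ldiv p a = a <-> rdiv a p = a in
  let c4 := forall a, ldiv p a = rdiv a p in
  let c5 := forall x, (exists a, x = ldiv p a) <-> (exists a, x = rdiv a p) in
  (c1 <-> c2) /\ (c1 <-> c3) /\ (c1 <-> c4) /\ (c1 <-> c5).
Proof.
  destruct HA as [Hrefl [Hanti [Htr [Hass Hres]]]].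
  unfold is_positive in Hpos; unfold is_idempotent in Hidem.
  assert (R1 : forall x y z, le (mul x y) z <-> le y (ldiv x z)).
  { intros x y z; destruct (Hres x y z) as [H1 H2]; split; intro H;
    [apply H2, H1, H | apply H1, H2, H]. }
  assert (R2 : forall x y z, le (mul x y) z <-> le x (rdiv z y)).
  { intros x y z; apply (Hres x y z). }
  assert (L1 : forall a, le (ldiv p a) a).
  { intro a. apply Htr with (mul p (ldiv p a)). apply Hpos. apply R1, Hrefl. }
  assert (L1' : forall a, le (rdiv a p) a).
  { intro a. apply Htr with (mul (rdiv a p) p). apply Hpos. apply R2, Hrefl. }
  assert (M1 : forall a, ldiv p a = a <-> mul p a = a).
  { intro a; split; intro H.
    - apply Hanti; [|apply Hpos]. apply R1. rewrite H. apply Hrefl.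
    - apply Hanti; [apply L1|]. apply R1. rewrite H. apply Hrefl. }
  assert (M2 : forall a, rdiv a p = a <-> mul a p = a).
  { intro a; split; intro H.
    - apply Hanti; [|apply Hpos]. apply R2. rewrite H. apply Hrefl.
    - apply Hanti; [apply L1'|]. apply R2. rewrite H. apply Hrefl. }
  assert (I1 : forall b, ldiv p (ldiv p b) = ldiv p b).
  { intro b. apply M1. apply Hanti. apply (proj1 (R1 _ _ _)). rewrite <- Hass, Hidem. apply R1, Hrefl.
    apply Hpos. }
  assert (I2 : forall b, rdiv (rdiv b p) p = rdiv b p).
  { intro b. apply M2. apply Hanti. apply (proj1 (R2 _ _ _)). rewrite Hass, Hidem. apply R2, Hrefl.
    apply Hpos. }
  intros c1 c2 c3 c4 c5.
  assert (c12 : c1 -> c2). { intros H a. rewrite H. tauto. }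
  assert (c21 : c2 -> c1).
  { intros H a. assert (E1 : mul (mul p a) p = mul p a).
    { apply H. rewrite <- Hass, Hidem. reflexivity. }
    assert (E2 : mul p (mul a p) = mul a p).
    { apply H. rewrite Hass, Hidem. reflexivity. }
    rewrite <- E1, Hass. exact E2. }
  assert (c23 : c2 <-> c3).
  { split; intros H a; specialize (H a); specialize (M1 a); specialize (M2 a); tauto. }
  assert (c14 : c1 -> c4).
  { intros H a. apply Hanti.
    - apply R2. rewrite <- H. apply R1, Hrefl.
    - apply R1. rewrite H. apply R2, Hrefl. }
  assert (c45 : c4 -> c5).
  { intros H x; split; intros [a Ha]; exists a; rewrite Ha; [|symmetry]; apply H. }
  assert (c53 : c5 -> c3).
  { intros H a; split; intro E.
    - destruct (proj1 (H a) (ex_intro _ a (eq_sym E))) as [b Hb].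
      rewrite Hb. apply I2.
    - destruct (proj2 (H a) (ex_intro _ a (eq_sym E))) as [b Hb].
      rewrite Hb. apply I1. }
  assert (c13 : c1 <-> c3) by tauto.
  split; [tauto|]. split; [exact c13|]. split.
  - split; [exact c14|]. intro H. apply c13, c53, c45, H.
  - split; [intro H; apply c45, c14, H|]. intro H. apply c13, c53, H.
Qed.
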